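(* An action theory $\Theta=S\cup E\cup X$ is modular if and only if the big model of $\Theta$ is a model of $\Theta$.
   Context: Fix a set $\mathrm{Act}$ of atomic actions and a set $\mathrm{Prop}$ of atoms. Boolean formulas are classical propositional formulas over $\mathrm{Prop}$; $\models_{CPL}$ is classical consequence; a valuation is a maximal consistent set of literals, and $\mathrm{val}(S)$ is the set of valuations satisfying every formula of a set $S$ of Boolean formulas. Modal formulas are built from Boolean formulas using the Boolean connectives and a box $[a]$ for each $a\in\mathrm{Act}$; $\langle a\rangle\Phi:=\neg[a]\neg\Phi$. A PDL-model is $M=\langle W,R\rangle$ where $W$ is a set of valuations (worlds) and $R$ assigns to each $a$ a relation $R_a\subseteq W\times W$; $w\models_M p$ iff $p\in w$, $w\models_M[a]\Phi$ iff $w'\models_M\Phi$ for all $(w,w')\in R_a$, Boolean connectives as usual. $M\models\Phi$ iff $\Phi$ holds at every world of $M$; $M\models\Sigma$ iff $M\models\Phi$ for all $\Phi\in\Sigma$; $\Sigma\models_{PDL}\Phi$ iff every PDL-model of $\Sigma$ is a model of $\Phi$. A static law is a Boolean formula; an effect law for $a$ is $\varphi\to[a]\psi$ and an executability law for $a$ is $\varphi\to\langle a\rangle\top$, with $\varphi,\psi$ Boolean. An action theory is $\Theta=S\cup E\cup X$ with $S$ a set of static laws, $E$ a set of effect laws and $X$ a set of executability laws; $E_a$ denotes the effect laws for $a$. $\Theta$ is modular iff for every Boolean $\varphi$, $\Theta\models_{PDL}\varphi$ implies $S\models_{CPL}\varphi$. The big model of $\Theta$ is $M_{big}=\langle W_{big},R_{big}\rangle$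 with $W_{big}=\mathrm{val}(S)$ and, for each $a$, $(R_{big})_a=\{(w,w')\in W_{big}\times W_{big}:$ for all $\varphi\to[a]\psi\in E_a$, if $w\models\varphi$ then $w'\models\psi\}$. *)

(* Defs.v *)
Set Implicit Arguments.

Section Syntax.
Variables (Prp Act : Type).

Inductive bform : Type :=
| BVar : Prp -> bform
| BTop : bform
| BBot : bform
| BNot : bform -> bform
| BAnd : bform -> bform -> bform
| BOr  : bform -> bform -> bform
| BImp : bform -> bform -> bform.

Inductive mform : Type :=
| MB   : bform -> mform
| MNot : mform -> mform
| MAnd : mform -> mform -> mform
| MOr  : mform -> mform -> mform
| MImp : mform -> mform -> mform
| MBox : Act -> mform -> mform.

Definition MDia (a : Act) (F : mform) : mform := MNot (MBox a (MNot F)).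

(* A valuation (maximal consistent set of literals) is a total assignment. *)
Definition valuation := Prp -> bool.

Fixpoint bsat (v : valuation) (f : bform) : Prop :=
  match f with
  | BVar p => v p = true
  | BTop => True
  | BBot => False
  | BNot g => ~ bsat v g
  | BAnd g h => bsat v g /\ bsat v h
  | BOr g h => bsat v g \/ bsat v h
  | BImp g h => bsat v g -> bsat v h
  end.

Definition val (S : bform -> Prop) (v : valuation) : Prop :=
  forall g, S g -> bsat v g.

Definition cpl_entails (S : bform -> Prop) (f : bform) : Prop :=
  forall v, val S v -> bsat v f.

Record pdl_model : Type := {
  W : valuation -> Prop;
  R : Act -> valuation -> valuation -> Prop;
  R_in_W : forall a w w', R a w w' -> W w /\ W w'
}.

Fixpoint msat (M : pdl_model) (w : valuation) (F : mform) : Prop :=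
  match F with
  | MB f => bsat w f
  | MNot G => ~ msat M w G
  | MAnd G H => msat M w G /\ msat M w H
  | MOr G H => msat M w G \/ msat M w H
  | MImp G H => msat M w G -> msat M w H
  | MBox a G => forall w', R M a w w' -> msat M w' G
  end.

Definition valid_in (M : pdl_model) (F : mform) : Prop :=
  forall w, W M w -> msat M w F.

Definition model_of (M : pdl_model) (Sigma : mform -> Prop) : Prop :=
  forall F, Sigma F -> valid_in M F.

Definition pdl_entails (Sigma : mform -> Prop) (F : mform) : Prop :=
  forall M, model_of M Sigma -> valid_in M F.

(* Action theory Theta = S u E u X.
   S : static laws; E a phi psi : "phi -> [a] psi" is an effect law for a;
   X a phi : "phi -> <a>T" is an executability law for a. *)
Definition theory (S : bform -> Prop) (E : Act -> bform -> bform -> Prop)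
  (X : Act -> bform -> Prop) (F : mform) : Prop :=
  (exists f, S f /\ F = MB f)
  \/ (exists a f g, E a f g /\ F = MImp (MB f) (MBox a (MB g)))
  \/ (exists a f, X a f /\ F = MImp (MB f) (MDia a (MB BTop))).

Definition modular (S : bform -> Prop) (E : Act -> bform -> bform -> Prop)
  (X : Act -> bform -> Prop) : Prop :=
  forall f, pdl_entails (theory S E X) (MB f) -> cpl_entails S f.

Definition big_R (S : bform -> Prop) (E : Act -> bform -> bform -> Prop)
  (a : Act) (w w' : valuation) : Prop :=
  val S w /\ val S w' /\ (forall f g, E a f g -> bsat w f -> bsat w' g).

Lemma big_R_in_W (S : bform -> Prop) (E : Act -> bform -> bform -> Prop) :
  forall a w w', big_R S E a w w' -> val S w /\ val S w'.
Proof. intros a w w' [H1 [H2 _]]; split; assumption. Qed.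

Definition big_model (S : bform -> Prop) (E : Act -> bform -> bform -> Prop)
  : pdl_model :=
  {| W := val S; R := big_R S E; R_in_W := @big_R_in_W S E |}.

End Syntax.

(* Main.v *)
Require Import Defs.
From Stdlib Require Import List Classical ClassicalEpsilon.
From mathcomp Require classical_sets.

Lemma zorn_sets (T : Type) (P : (T -> Prop) -> Prop) :
  (forall F : (T -> Prop) -> Prop, (forall X, F X -> P X) ->
     (forall X Y, F X -> F Y -> (forall t, X t -> Y t) \/ (forall t, Y t -> X t)) ->
     P (fun a => exists2 X, F X & X a)) ->
  exists A, P A /\ forall B, (forall t, A t -> B t) -> ~ (forall t, B t -> A t) -> ~ P B.
Proof.
  intro H.
  destruct (@classical_sets.Zorn_bigcup T P H) as [A [HA HB]].
  exists A; split; [exact HA|].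
  intros B h1 h2; apply HB; split; assumption.
Qed.

Section Compact.
Variable Prp : Type.

Definition fsat (G : bform Prp -> Prop) : Prop :=
  forall L : list (bform Prp), (forall x, In x L -> G x) ->
    exists v : valuation Prp, forall x, In x L -> bsat v x.

Lemma chain_list (G : bform Prp -> Prop) (F : (bform Prp -> Prop) -> Prop)
  (tot : forall X Y, F X -> F Y -> (forall t, X t -> Y t) \/ (forall t, Y t -> X t))
  (L : list (bform Prp)) :
  (forall x, In x L -> G x \/ exists2 X, F X & X x) ->
  (forall x, In x L -> G x) \/ exists2 X, F X & (forall x, In x L -> G x \/ X x).
Proof.
  induction L as [|y L IH]; intro HL.
  - left; intros x [].
  - destruct IH as [H1 | [X FX H2]].
    + intros x hx; apply HL; right; exact hx.
    + destruct (HL y (or_introl eq_refl)) as [Gy | [Y FY Yy]].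
      * left; intros x [<- | hx]; auto.
      * right; exists Y; [exact FY|]. intros x [<- | hx]; auto.
    + destruct (HL y (or_introl eq_refl)) as [Gy | [Y FY Yy]].
      * right; exists X; [exact FX|]. intros x [<- | hx]; auto.
      * destruct (tot X Y FX FY) as [XY | YX].
        -- right; exists Y; [exact FY|]. intros x [<- | hx]; auto.
           destruct (H2 x hx); auto.
        -- right; exists X; [exact FX|]. intros x [<- | hx]; auto.
Qed.

Lemma list_app_in (A : Type) (P : A -> Prop) (L1 L2 : list A) :
  (forall x, In x L1 -> P x) -> (forall x, In x L2 -> P x) ->
  forall x, In x (L1 ++ L2) -> P x.
Proof. intros h1 h2 x hx; apply in_app_or in hx; destruct hx; auto. Qed.

Lemma list_split (A : Type) (P Q : A -> Prop) (M : list A) :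
  (forall x, In x M -> P x \/ Q x) ->
  exists M', (forall x, In x M' -> P x) /\ forall x, In x M -> In x M' \/ Q x.
Proof.
  induction M as [|y M IH]; intro H.
  - exists nil; split; intros x [].
  - destruct IH as [M' [h1 h2]]. { intros x hx; apply H; right; exact hx. }
    destruct (H y (or_introl eq_refl)) as [Py | Qy].
    + exists (y :: M'); split.
      * intros x [<- | hx]; auto.
      * intros x [<- | hx]. left; left; reflexivity. destruct (h2 x hx); auto. left; right; auto.
    + exists M'; split; auto. intros x [<- | hx]; auto.
Qed.

Theorem compactness (G : bform Prp -> Prop) :
  fsat G -> exists v, forall f, G f -> bsat v f.
Proof.
  intro HG.
  destruct (@zorn_sets (bform Prp) (fun A => fsat (fun f => G f \/ A f))) as [A [HA Hmax]].
  { intros F FP tot L HL.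
    destruct (@chain_list G F tot L) as [H1 | [X FX H2]].
    - intros x hx; exact (HL x hx).
    - apply HG; exact H1.
    - apply (FP X FX); exact H2. }
  set (D := fun f => G f \/ A f).
  assert (HD : fsat D) by exact HA.
  assert (Hadd : forall f, fsat (fun g => D g \/ g = f) -> D f).
  { intros f Hf. apply NNPP; intro nDf.
    apply (Hmax (fun g => A g \/ g = f)).
    - intros t ht; left; exact ht.
    - intro h. pose proof (h f (or_intror eq_refl)) as Af. apply nDf; right; exact Af.
    - intros L HL; apply Hf. intros x hx; destruct (HL x hx) as [g | [a | e]];
        unfold D; tauto. }
  assert (Hent : forall L h, (forall x, In x L -> D x) ->
            (forall v, (forall x, In x L -> bsat v x) -> bsat v h) -> D h).
  { intros L h HL Himp. apply Hadd. intros M HM.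
    destruct (@list_split _ D (fun g => g = h) M HM) as [M' [h1 h2]].
    destruct (HD (L ++ M')) as [v Hv].
    { apply list_app_in; auto. }
    exists v. intros x hx. destruct (h2 x hx) as [i | e].
    - apply Hv; apply in_or_app; right; exact i.
    - subst x. apply Himp. intros y hy; apply Hv; apply in_or_app; left; exact hy. }
  assert (Hcons : forall h, D h -> ~ D (BNot h)).
  { intros h Dh Dn. destruct (HD (h :: BNot h :: nil)) as [v Hv].
    - intros x [<- | [<- | []]]; auto.
    - apply (Hv (BNot h)). right; left; reflexivity. apply Hv; left; reflexivity. }
  assert (Hdich : forall h, D h \/ D (BNot h)).
  { intro h. destruct (classic (D h)) as [y | n]; auto. right.
    apply Hadd. intros M HM.
    destruct (@list_split _ D (fun g => g = BNot h) M HM) as [M' [h1 h2]].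
    (* if fails, then D h by Hadd *)
    apply NNPP; intro Hno. apply n. apply Hadd. intros N HN.
    destruct (@list_split _ D (fun g => g = h) N HN) as [N' [k1 k2]].
    destruct (HD (M' ++ N')) as [v Hv]. { apply list_app_in; auto. }
    exists v. intros x hx. destruct (k2 x hx) as [i | e].
    - apply Hv; apply in_or_app; right; exact i.
    - subst x. apply NNPP; intro nh. apply Hno. exists v. intros y hy.
      destruct (h2 y hy) as [i | e].
      + apply Hv; apply in_or_app; left; exact i.
      + subst y. exact nh. }
  pose (v := fun p => if excluded_middle_informative (D (BVar p)) then true else false).
  assert (Hv : forall f, bsat v f <-> D f).
  { induction f as [p| | |g IH|g IHg h IHh|g IHg h IHh|g IHg h IHh]; simpl.
    - unfold v. destruct (excluded_middle_informative (D (BVar p))); split; intro; auto; try discriminate; contradiction.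
    - split; auto. intros _. apply (Hent nil); simpl; auto. intros _ []. 
    - split; [intros []|]. intro d. destruct (HD (BBot Prp :: nil)) as [w Hw].
      + intros x [<- | []]; auto.
      + apply (Hw (BBot Prp)); left; reflexivity.
    - rewrite IH. split.
      + intro n; destruct (Hdich g); tauto.
      + intros d dg; exact (Hcons g dg d).
    - rewrite IHg, IHh. split.
      + intros [a b]. apply (Hent (g :: h :: nil)).
        * intros x [<- | [<- | []]]; auto.
        * intros w Hw; simpl; split; apply Hw; simpl; auto.
      + intro d; split.
        * apply (Hent (BAnd g h :: nil)). intros x [<- | []]; auto.
          intros w Hw; destruct (Hw (BAnd g h) (or_introl eq_refl)); auto.
        * apply (Hent (BAnd g h :: nil)). intros x [<- | []]; auto.
          intros w Hw; destruct (Hw (BAnd g h) (or_introl eq_refl)); auto.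
    - rewrite IHg, IHh. split.
      + intros [a | b].
        * apply (Hent (g :: nil)). intros x [<- | []]; auto.
          intros w Hw; simpl; left; apply Hw; simpl; auto.
        * apply (Hent (h :: nil)). intros x [<- | []]; auto.
          intros w Hw; simpl; right; apply Hw; simpl; auto.
      + intro d. destruct (Hdich g) as [a | a]; auto. destruct (Hdich h) as [b | b]; auto.
        exfalso. destruct (HD (BOr g h :: BNot g :: BNot h :: nil)) as [w Hw].
        * intros x [<- | [<- | [<- | []]]]; auto.
        * destruct (Hw (BOr g h) (or_introl eq_refl)) as [z | z].
          -- apply (Hw (BNot g)); simpl; auto.
          -- apply (Hw (BNot h)); simpl; auto.
    - rewrite IHg, IHh. split.
      + intro Hi. destruct (Hdich g) as [a | a].
        * apply (Hent (h :: nil)).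
          -- intros y [<- | []]; auto.
          -- intros w Hw; simpl; intros _; apply Hw; simpl; auto.
        * apply (Hent (BNot g :: nil)). intros x [<- | []]; auto.
          intros w Hw z. exfalso. apply (Hw (BNot g)); simpl; auto.
      + intros d dg. apply (Hent (g :: BImp g h :: nil)).
        * intros x [<- | [<- | []]]; auto.
        * intros w Hw. apply (Hw (BImp g h)); simpl; auto. apply Hw; simpl; auto. }
  exists v. intros f Gf. apply Hv. left; exact Gf.
Qed.
End Compact.

Theorem theorem3 (Prp Act : Type) (S : bform Prp -> Prop)
  (E : Act -> bform Prp -> bform Prp -> Prop) (X : Act -> bform Prp -> Prop) :
  modular S E X <-> model_of (big_model S E) (theory S E X).
Proof.
  split.
  - intros Hmod F HF.
    destruct HF as [[f [Sf ->]] | [[a [f [g [Ef ->]]]] | [a [f [Xf ->]]]]].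
    + intros w Hw. simpl. exact (Hw f Sf).
    + intros w Hw. simpl. intros hf w' [_ [_ HR]]. exact (HR f g Ef hf).
    + intros w Hw. simpl. intros hf Hall.
      set (Trig := fun psi => exists phi, E a phi psi /\ bsat w phi).
      assert (Hfs : @fsat Prp (fun g => S g \/ Trig g)).
      { intros L HL.
        assert (Hth : exists th, bsat w th /\ forall u u',
            bsat u th -> (forall p q, E a p q -> bsat u p -> bsat u' q) ->
            forall x, In x L -> Trig x -> bsat u' x).
        { clear HL. induction L as [|y L IH].
          - exists (BTop Prp). split; [simpl; auto|]. intros u u' _ _ x [].
          - destruct IH as [th [Hth1 Hth2]].
            destruct (classic (Trig y)) as [[p [Ep wp]] | nT].
            + exists (BAnd p th). split; [simpl; auto|].
              intros u u' [up uth] Hu x [<- | hx] Tx.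
              * exact (Hu p y Ep up).
              * exact (Hth2 u u' uth Hu x hx Tx).
            + exists th. split; auto. intros u u' uth Hu x [<- | hx] Tx.
              * contradiction.
              * exact (Hth2 u u' uth Hu x hx Tx). }
        destruct Hth as [th [Hth1 Hth2]].
        apply NNPP; intro Hno.
        assert (Hent : pdl_entails (theory S E X) (@MB Prp Act (BNot (BAnd f th)))).
        { intros M HM u Wu. simpl. intros [uf uth].
          assert (Hex := HM _ (or_intror (or_intror (ex_intro _ a (ex_intro _ f (conj Xf eq_refl))))) u Wu).
          simpl in Hex. specialize (Hex uf).
          apply Hex. intros u' Ru' _.
          apply Hno. exists u'. intros x hx.
          destruct (HL x hx) as [Sx | Tx].
          - destruct (R_in_W M a u u' Ru') as [_ Wu'].
            exact (HM _ (or_introl (ex_intro _ x (conj Sx eq_refl))) u' Wu').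
          - apply (Hth2 u u' uth); auto.
            intros p q Epq up.
            exact (HM _ (or_intror (or_introl (ex_intro _ a (ex_intro _ p (ex_intro _ q (conj Epq eq_refl)))))) u Wu up u' Ru'). }
        apply (Hmod _ Hent w Hw). simpl. auto. }
      destruct (@compactness Prp _ Hfs) as [v Hv].
      apply (Hall v); [|exact I].
      split; [exact Hw|]. split.
      * intros g Sg; apply Hv; left; exact Sg.
      * intros p q Epq wp. apply Hv. right. exists p; auto.
  - intros Hbig f Hent w Hw. exact (Hent _ Hbig w Hw).
Qed.
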